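(* Let $Q$ be a diassociative loop. Then the assignment $\sigma(L_x)=R_x$, $\sigma(L_x^{-1})=R_x^{-1}$, $\sigma(R_x)=M_x^{-1}$, $\sigma(R_x^{-1})=M_x$ (for $x\in Q$, where $M_x=R_xL_x$) defines a well-defined mapping $\sigma:\{L_x,R_x,L_x^{-1},R_x^{-1}:x\in Q\}\to\mathrm{Mlt}(Q)$ if and only if $x^3=1$ for every $x\in\mathrm{Com}(Q)$.
   Context: A loop is a magma with identity $1$ in which the left translations $L_x(y)=xy$ and right translations $R_x(y)=yx$ are bijections; it is diassociative if any two elements generate a subgroup. $\mathrm{Mlt}(Q)$ is the permutation group generated by all $L_x,R_x$. The commutant is $\mathrm{Com}(Q)=\{x\in Q: xy=yx\text{ for all }y\in Q\}$. Well-definedness means that whenever two of the permutations $L_x,R_x,L_x^{-1},R_x^{-1},L_y,\dots$ coincide, their prescribed images coincide. *)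

(* Defs.v *)
(* A loop on a carrier T, presented with its translation inverses:
   ldiv x = L_x^{-1}, rdiv x = R_x^{-1}.  The cancellation laws say exactly
   that L_x : y |-> x*y and R_x : y |-> y*x are bijections with these inverses. *)
Record loop (T : Type) := Loop {
  mul  : T -> T -> T;
  one  : T;
  ldiv : T -> T -> T;
  rdiv : T -> T -> T;   (* rdiv x y = y / x = R_x^{-1} y *)
  mul1l : forall x, mul one x = x;
  mul1r : forall x, mul x one = x;
  ldivK : forall x y, mul x (ldiv x y) = y;
  mulKl : forall x y, ldiv x (mul x y) = y;
  rdivK : forall x y, mul (rdiv x y) x = y;
  mulKr : forall x y, rdiv x (mul y x) = y
}.
Arguments mul {T} l _ _.
Arguments one {T} l.
Arguments ldiv {T} l _ _.
Arguments rdiv {T} l _ _.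

Section LoopDefs.
Context {T : Type} (Q : loop T).

Definition Lt (x : T) : T -> T := fun y => mul Q x y.
Definition Rt (x : T) : T -> T := fun y => mul Q y x.
Definition Lt_inv (x : T) : T -> T := fun y => ldiv Q x y.
Definition Rt_inv (x : T) : T -> T := fun y => rdiv Q x y.
Definition Mt (x : T) : T -> T := fun y => Rt x (Lt x y).
Definition Mt_inv (x : T) : T -> T := fun y => Lt_inv x (Rt_inv x y).

Definition subloop (P : T -> Prop) : Prop :=
  P (one Q) /\
  (forall a b, P a -> P b -> P (mul Q a b)) /\
  (forall a b, P a -> P b -> P (ldiv Q a b)) /\
  (forall a b, P a -> P b -> P (rdiv Q a b)).

Definition gen2 (x y : T) : T -> Prop :=
  fun z => forall P, subloop P -> P x -> P y -> P z.

(* diassociative: the subloop generated by any two elements is a group,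
   i.e. the multiplication is associative on it *)
Definition diassociative : Prop :=
  forall x y a b c, gen2 x y a -> gen2 x y b -> gen2 x y c ->
    mul Q (mul Q a b) c = mul Q a (mul Q b c).

Definition in_Com (x : T) : Prop := forall y, mul Q x y = mul Q y x.

Inductive gen_sym : Type :=
| SL : T -> gen_sym
| SLi : T -> gen_sym
| SR : T -> gen_sym
| SRi : T -> gen_sym.

Definition gen_perm (g : gen_sym) : T -> T :=
  match g with
  | SL x => Lt x
  | SLi x => Lt_inv x
  | SR x => Rt x
  | SRi x => Rt_inv x
  end.

Definition sigma_img (g : gen_sym) : T -> T :=
  match g with
  | SL x => Rt x
  | SLi x => Rt_inv x
  | SR x => Mt_inv x
  | SRi x => Mt x
  end.

Definition sigma_well_defined : Prop :=
  forall g h : gen_sym,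
    (forall z, gen_perm g z = gen_perm h z) ->
    (forall z, sigma_img g z = sigma_img h z).

End LoopDefs.

(* Main.v *)
Require Import Defs.

Section S.
Variable T : Type.
Variable Q : loop T.
Hypothesis D : diassociative Q.
Local Notation m := (mul Q).
Local Notation e := (one Q).
Local Notation inv a := (ldiv Q a (one Q)).

Lemma g_x x y : gen2 Q x y x. Proof. intros P _ H _; exact H. Qed.
Lemma g_y x y : gen2 Q x y y. Proof. intros P _ _ H; exact H. Qed.
Lemma g_one x y : gen2 Q x y e. Proof. intros P [H _] _ _; exact H. Qed.
Lemma g_mul x y a b : gen2 Q x y a -> gen2 Q x y b -> gen2 Q x y (m a b).
Proof. intros Ha Hb P HP Hx Hy. pose proof HP as HP'; destruct HP' as (_ & H & _). apply H; [apply Ha|apply Hb]; auto. Qed.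
Lemma g_ldiv x y a b : gen2 Q x y a -> gen2 Q x y b -> gen2 Q x y (ldiv Q a b).
Proof. intros Ha Hb P HP Hx Hy. pose proof HP as HP'; destruct HP' as (_ & _ & H & _). apply H; [apply Ha|apply Hb]; auto. Qed.
Lemma g_rdiv x y a b : gen2 Q x y a -> gen2 Q x y b -> gen2 Q x y (rdiv Q a b).
Proof. intros Ha Hb P HP Hx Hy. pose proof HP as HP'; destruct HP' as (_ & _ & _ & H). apply H; [apply Ha|apply Hb]; auto. Qed.

Ltac gt := repeat first [apply g_mul | apply g_ldiv | apply g_rdiv | apply g_one | apply g_x | apply g_y].

Lemma A x y a b c : gen2 Q x y a -> gen2 Q x y b -> gen2 Q x y c -> m (m a b) c = m a (m b c).
Proof. intros; apply (D x y); auto. Qed.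

Lemma rc u v c : m u c = m v c -> u = v.
Proof. intro H. rewrite <- (mulKr _ Q c u), H. apply mulKr. Qed.
Lemma lc c u v : m c u = m c v -> u = v.
Proof. intro H. rewrite <- (mulKl _ Q c u), H. apply mulKl. Qed.

Lemma invr a : m a (inv a) = e. Proof. apply ldivK. Qed.
Lemma invl a : m (inv a) a = e.
Proof. apply (rc _ _ (inv a)). rewrite (A a a) by gt. rewrite invr, mul1l, mul1r. reflexivity. Qed.
Lemma ldivE a z : ldiv Q a z = m (inv a) z.
Proof. apply (lc a). rewrite ldivK. rewrite <- (A a z a (inv a) z) by gt. rewrite invr, mul1l. reflexivity. Qed.
Lemma rdivE a z : rdiv Q a z = m z (inv a).
Proof. apply (rc _ _ a). rewrite rdivK. rewrite (A a z z (inv a) a) by gt. rewrite invl, mul1r. reflexivity. Qed.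
Lemma invinv a : inv (inv a) = a.
Proof. apply (lc (inv a)). rewrite ldivK. symmetry; apply invl. Qed.

Lemma MtiE a z : Mt_inv Q a z = m (inv a) (m z (inv a)).
Proof. unfold Mt_inv, Lt_inv, Rt_inv. rewrite ldivE, rdivE. reflexivity. Qed.

Definition nk (g : @gen_sym T) : bool * T :=
  match g with
  | SL x => (true, x) | SLi x => (true, inv x)
  | SR x => (false, x) | SRi x => (false, inv x) end.

Lemma perm_n g z : gen_perm Q g z =
  match nk g with (k, a) => if k then m a z else m z a end.
Proof.
  destruct g; simpl; unfold Lt, Rt, Lt_inv, Rt_inv;
  try rewrite (ldivE t z); try rewrite (rdivE t z); reflexivity.
Qed.

Lemma img_n g z : sigma_img Q g z =
  match nk g with (k, a) => if k then m z a else Mt_inv Q a z end.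
Proof.
  destruct g; simpl; unfold Lt, Rt, Lt_inv, Rt_inv; try reflexivity.
  - apply rdivE.
  - rewrite MtiE, invinv. unfold Mt, Rt, Lt. apply (A t z); gt.
Qed.

Lemma key a : in_Com Q a ->
  (m (m a a) a = e <-> forall z, m z a = Mt_inv Q a z).
Proof.
  intro Hc. split.
  - intros C z. rewrite MtiE.
    assert (aa : m a a = inv a). { apply (rc _ _ a). rewrite C, invl. reflexivity. }
    rewrite <- aa.
    rewrite <- (A a z (m a a) z (m a a)) by gt.
    assert (E1 : m (m a a) z = m z (m a a)).
    { rewrite (A a z a a z) by gt. rewrite (Hc z).
      rewrite <- (A a z a z a) by gt. rewrite (Hc z).
      rewrite (A a z z a a) by gt. reflexivity. }
    rewrite E1. rewrite (A a z z (m a a) (m a a)) by gt.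
    rewrite <- (A a z (m a a) a a) by gt. rewrite C, mul1l. reflexivity.
  - intros Hz. pose proof (Hz e) as H1. rewrite MtiE, mul1l, mul1l in H1.
    assert (aa : m a a = inv a).
    { transitivity (m a (m (inv a) (inv a))). { f_equal; exact H1. }
      rewrite <- (A a a a (inv a) (inv a)) by gt. rewrite invr, mul1l. reflexivity. }
    rewrite aa. apply invl.
Qed.

Theorem main : sigma_well_defined Q <->
   (forall x : T, in_Com Q x -> mul Q (mul Q x x) x = one Q).
Proof.
  split.
  - intros W x Hc. apply key; auto. intro z.
    apply (W (SL x) (SR x)). intro y. simpl; unfold Lt, Rt. apply Hc.
  - intros C g h H z. rewrite !img_n.
    pose proof (fun z => eq_trans (eq_sym (perm_n g z)) (eq_trans (H z) (perm_n h z))) as H'.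
    clear H. destruct (nk g) as [[|] a], (nk h) as [[|] b]; simpl in *.
    + specialize (H' e) as Hab. rewrite !mul1r in Hab. subst; reflexivity.
    + pose proof (H' e) as Hab. rewrite mul1r, mul1l in Hab. subst.
      apply (key b H'); auto.
    + pose proof (H' e) as Hab. rewrite mul1r, mul1l in Hab. subst.
      assert (Hc : in_Com Q b) by (intro y; symmetry; apply H').
      symmetry. apply (key b Hc); auto.
    + specialize (H' e) as Hab. rewrite !mul1l in Hab. subst; reflexivity.
Qed.
End S.

Theorem lemma6p1 (T : Type) (Q : loop T) :
  diassociative Q ->
  (sigma_well_defined Q <->
   (forall x : T, in_Com Q x -> mul Q (mul Q x x) x = one Q)).
Proof. intro D. exact (main T Q D). Qed.
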